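(* Let $\sigma=\begin{pmatrix}\frac13&0\\0&\frac23\end{pmatrix}$ and $D=\sigma\otimes\frac{I_3}{3}\in M_6$. There exists an extreme point of the convex set $\mathcal{CP}(M_6,M_6;D,D)$ with Choi rank $8$.
   Context: $M_n$ denotes the complex $n\times n$ matrices. For positive semidefinite $A\in M_{d_1}$, $B\in M_{d_2}$, $\mathcal{CP}(M_{d_1},M_{d_2};A,B)$ is the convex set of completely positive maps $\Phi:M_{d_1}\to M_{d_2}$ with $\Phi(I_{d_1})=B$ and $\Phi^*(I_{d_2})=A$ ($\Phi^*$ the Hilbert–Schmidt adjoint); equivalently $\Phi(X)=\sum_iK_iXK_i^\dagger$ with $\sum_iK_i^\dagger K_i=A$, $\sum_iK_iK_i^\dagger=B$. An extreme point of a convex set $\mathcal{K}$ is an element not expressible as $t\Phi_1+(1-t)\Phi_2$ with $t\in(0,1)$ and distinct $\Phi_1,\Phi_2\in\mathcal{K}$. The Choi rank of $\Phi$ is the rank of $\sum_{r,s}E_{rs}\otimes\Phi(E_{rs})$. *)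

(* Defs.v *)
From HB Require Import structures.
From mathcomp Require Import all_boot all_order all_algebra.
From mathcomp Require Import reals.
From mathcomp Require Import complex mxtens.
Set Implicit Arguments. Unset Strict Implicit. Unset Printing Implicit Defensive.
Import Order.TTheory GRing.Theory Num.Theory.
Local Open Scope ring_scope.

Section QuantumDefs.
Variable C : numClosedFieldType.

Definition adjmx m n (A : 'M[C]_(m, n)) : 'M[C]_(n, m) := (map_mx Num.conj A)^T.

Definition psdmx n (A : 'M[C]_n) : Prop :=
  adjmx A = A /\ forall v : 'cV[C]_n, 0 <= (adjmx v *m A *m v) 0 0.

Definition linmap d1 d2 (Phi : 'M[C]_d1 -> 'M[C]_d2) : Prop :=
  forall (a : C) (X Y : 'M[C]_d1), Phi (a *: X + Y) = a *: Phi X + Phi Y.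

Definition positive_map d1 d2 (Phi : 'M[C]_d1 -> 'M[C]_d2) : Prop :=
  forall X, psdmx X -> psdmx (Phi X).

(* id_{M_k} (x) Phi acting on M_k(M_d1) = k x k block matrices with d1 x d1 blocks *)
Definition ampliation k d1 d2 (Phi : 'M[C]_d1 -> 'M[C]_d2)
  (X : 'M[C]_(\sum_(i < k) d1)) : 'M[C]_(\sum_(i < k) d2) :=
  \mxblock_(i < k, j < k) Phi (submxblock X i j).

Definition completely_positive d1 d2 (Phi : 'M[C]_d1 -> 'M[C]_d2) : Prop :=
  forall k : nat, positive_map (@ampliation k d1 d2 Phi).

(* Phi^*(Y) = Z for the Hilbert--Schmidt adjoint Phi^*, i.e.
   <Z, X>_HS = <Y, Phi X>_HS for all X, with <A,B>_HS = tr(A^dagger B) *)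
Definition hs_adjoint_at d1 d2 (Phi : 'M[C]_d1 -> 'M[C]_d2)
  (Y : 'M[C]_d2) (Z : 'M[C]_d1) : Prop :=
  forall X : 'M[C]_d1, \tr (adjmx Z *m X) = \tr (adjmx Y *m Phi X).

Definition CPset d1 d2 (A : 'M[C]_d1) (B : 'M[C]_d2)
  (Phi : 'M[C]_d1 -> 'M[C]_d2) : Prop :=
  [/\ linmap Phi, completely_positive Phi, Phi 1%:M = B
    & hs_adjoint_at Phi 1%:M A].

Definition extreme_point d1 d2 (K : ('M[C]_d1 -> 'M[C]_d2) -> Prop)
  (Phi : 'M[C]_d1 -> 'M[C]_d2) : Prop :=
  K Phi /\
  ~ (exists (t : C) (Phi1 Phi2 : 'M[C]_d1 -> 'M[C]_d2),
        [/\ 0 < t < 1, K Phi1, K Phi2, Phi1 <> Phi2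
          & Phi = (fun X => t *: Phi1 X + (1 - t) *: Phi2 X)]).

(* Choi matrix  sum_{r,s} E_rs (x) Phi(E_rs)  as a d1 x d1 block matrix *)
Definition choi_mx d1 d2 (Phi : 'M[C]_d1 -> 'M[C]_d2) : 'M[C]_(\sum_(r < d1) d2) :=
  \mxblock_(r < d1, s < d1) Phi (delta_mx r s).

Definition choi_rank d1 d2 (Phi : 'M[C]_d1 -> 'M[C]_d2) : nat := \rank (choi_mx Phi).

End QuantumDefs.

Definition sigma_mx (C : numClosedFieldType) : 'M[C]_2 :=
  \matrix_(i < 2, j < 2)
    (if i == j then (if (i : nat) == 0%N then 3^-1 else 2 / 3) else 0).

Definition D_mx (C : numClosedFieldType) : 'M[C]_6 :=
  tensmx (sigma_mx C) (3^-1 *: (1%:M : 'M[C]_3)).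

(* Main.v *)
Require Import Defs.
From HB Require Import structures.
From mathcomp Require Import all_boot all_order all_algebra.
From mathcomp Require Import reals.
From mathcomp Require Import complex mxtens.
From mathcomp Require Import ring lra.
From Stdlib Require Import FunctionalExtensionality.
Set Implicit Arguments. Unset Strict Implicit. Unset Printing Implicit Defensive.
Import Order.TTheory GRing.Theory Num.Theory.
Local Open Scope ring_scope.


Section Gen.
Variable C : numClosedFieldType.

Lemma adjmxE m n (A : 'M[C]_(m,n)) i j : adjmx A i j = (A j i)^*.
Proof. by rewrite !mxE. Qed.

Lemma adjmxK m n (A : 'M[C]_(m,n)) : adjmx (adjmx A) = A.
Proof. by apply/matrixP => i j; rewrite !adjmxE conjCK. Qed.

Lemma adjmxM m n p (A : 'M[C]_(m,n)) (B : 'M[C]_(n,p)) :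
  adjmx (A *m B) = adjmx B *m adjmx A.
Proof.
apply/matrixP => i j; rewrite !mxE rmorph_sum; apply: eq_bigr => k _.
by rewrite !mxE rmorphM mulrC.
Qed.

Lemma adjmxD m n (A B : 'M[C]_(m,n)) : adjmx (A + B) = adjmx A + adjmx B.
Proof. by apply/matrixP => i j; rewrite !mxE rmorphD. Qed.

Lemma adjmxN m n (A : 'M[C]_(m,n)) : adjmx (- A) = - adjmx A.
Proof. by apply/matrixP => i j; rewrite !mxE rmorphN. Qed.

Lemma adjmxB m n (A B : 'M[C]_(m,n)) : adjmx (A - B) = adjmx A - adjmx B.
Proof. by rewrite adjmxD adjmxN. Qed.

Lemma adjmxZ m n a (A : 'M[C]_(m,n)) : adjmx (a *: A) = a^* *: adjmx A.
Proof. by apply/matrixP => i j; rewrite !mxE rmorphM. Qed.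

Lemma adjmx_sum m n (I : finType) (F : I -> 'M[C]_(m,n)) :
  adjmx (\sum_i F i) = \sum_i adjmx (F i).
Proof.
apply/matrixP => i j; rewrite !mxE !summxE rmorph_sum; apply: eq_bigr => k _.
by rewrite !mxE.
Qed.

Lemma adjmx1 n : adjmx (1%:M : 'M[C]_n) = 1%:M.
Proof. apply/matrixP => i j; rewrite !mxE eq_sym; exact: conjC_nat. Qed.

Lemma adjmx0 m n : adjmx (0 : 'M[C]_(m,n)) = 0.
Proof. by apply/matrixP => i j; rewrite !mxE conjC0. Qed.

Lemma adjmx_delta m n (i : 'I_m) (j : 'I_n) : adjmx (delta_mx i j : 'M[C]_(m,n)) = delta_mx j i.
Proof.
apply/matrixP => a b; rewrite !mxE.
by case: (b == i); case: (a == j); rewrite /= ?conjC1 ?conjC0.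
Qed.

Lemma form_ge0 m (y : 'cV[C]_m) : 0 <= (adjmx y *m y) 0 0.
Proof.
rewrite mxE; apply: sumr_ge0 => i _; rewrite !mxE mulrC; exact: mul_conjC_ge0.
Qed.

Lemma form_eq0 m (y : 'cV[C]_m) : (adjmx y *m y) 0 0 = 0 -> y = 0.
Proof.
rewrite mxE => H; apply/matrixP => i j; rewrite (ord1 j) mxE.
have H0 : forall k, 0 <= adjmx y 0 k * y k 0.
  by move=> k; rewrite !mxE mulrC; exact: mul_conjC_ge0.
have := @psumr_eq0P _ _ xpredT (fun k => adjmx y 0 k * y k 0) (fun k _ => H0 k) H i isT.
rewrite !mxE mulrC => /eqP; rewrite mul_conjC_eq0 => /eqP //.
Qed.

Lemma psd_mul_adj m p (u : 'M[C]_(m,p)) : psdmx (u *m adjmx u).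
Proof.
split; first by rewrite adjmxM adjmxK.
move=> v; have -> : adjmx v *m (u *m adjmx u) *m v = adjmx (adjmx u *m v) *m (adjmx u *m v).
  by rewrite adjmxM adjmxK !mulmxA.
exact: form_ge0.
Qed.

Lemma psd_conj m p (W : 'M[C]_(p,m)) (X : 'M[C]_m) :
  psdmx X -> psdmx (W *m X *m adjmx W).
Proof.
case=> hX qX; split; first by rewrite !adjmxM adjmxK hX mulmxA.
move=> v; have := qX (adjmx W *m v).
by rewrite adjmxM adjmxK !mulmxA.
Qed.

Lemma psd0 n : psdmx (0 : 'M[C]_n).
Proof. split; first exact: adjmx0. by move=> v; rewrite mulmx0 mul0mx mxE. Qed.

Lemma psdD n (A B : 'M[C]_n) : psdmx A -> psdmx B -> psdmx (A + B).
Proof.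
case=> hA qA [hB qB]; split; first by rewrite adjmxD hA hB.
move=> v; rewrite mulmxDr mulmxDl mxE; apply: addr_ge0; [exact: qA|exact: qB].
Qed.

Lemma psd_sum n (I : finType) (F : I -> 'M[C]_n) :
  (forall i, psdmx (F i)) -> psdmx (\sum_i F i).
Proof.
move=> H; apply: (big_ind (@psdmx C n)); [exact: psd0|exact: psdD|by []].
Qed.

End Gen.


Section Gen2.
Variable C : numClosedFieldType.

Lemma psd_form0 n (A : 'M[C]_n) (u : 'cV_n) :
  psdmx A -> (adjmx u *m A *m u) 0 0 = 0 -> A *m u = 0.
Proof.
case=> hA qA H0.
set w := A *m u.
set N := adjmx w *m w.
set Cm := adjmx w *m A *m w.
have nn0 : 0 <= N 0 0 := form_ge0 w.
have c0 : 0 <= Cm 0 0 := qA w.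
have c1 : 0 < Cm 0 0 + 1 by rewrite ltr_wpDl.
set s := N 0 0 / (Cm 0 0 + 1).
have s0 : 0 <= s by rewrite divr_ge0 // ltW.
have e1 : adjmx u *m A = adjmx w by rewrite /w adjmxM hA.
have e2 : adjmx w *m u = 0.
  by apply/matrixP => i j; rewrite !ord1 -e1 H0 mxE.
have E : adjmx (u - s *: w) *m A *m (u - s *: w) = (s * s) *: Cm - (s + s) *: N.
  rewrite adjmxB adjmxZ (geC0_conj s0) mulmxBl -scalemxAl e1.
  rewrite mulmxBr mulmxBl e2 -!scalemxAr -!scalemxAl /N /Cm /w.
  rewrite mulmxBl -scalemxAl -!mulmxA.
  set X := adjmx (A *m u) *m (A *m u); set Y := adjmx (A *m u) *m (A *m (A *m u)).
  rewrite scalerBr scalerA scalerDl sub0r opprB.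
  by rewrite addrCA opprD.
have key := qA (u - s *: w).
have E2 : ((s * s) *: Cm - (s + s) *: N) 0 0 = s * s * Cm 0 0 - (s + s) * N 0 0.
  by rewrite !mxE.
rewrite E E2 in key.
have : N 0 0 ^+ 2 * (Cm 0 0 + 2) / (Cm 0 0 + 1) ^+ 2 = 0.
  apply/eqP; rewrite eq_le; apply/andP; split; last first.
    apply: divr_ge0; [apply: mulr_ge0; [exact: exprn_ge0|exact: addr_ge0] | exact: exprn_ge0 (ltW c1)].
  rewrite -oppr_ge0; apply: le_trans key _; rewrite le_eqVlt; apply/orP; left.
  apply/eqP; rewrite /s; field; rewrite gt_eqF //.
have c2 : 0 < Cm 0 0 + 2 by rewrite ltr_wpDl.
move/eqP; rewrite mulf_eq0 invr_eq0 expf_eq0 (gt_eqF c1) andbF orbF.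
rewrite mulf_eq0 (gt_eqF c2) orbF expf_eq0 /= => /eqP Nz.
by apply: form_eq0; exact: Nz.
Qed.

End Gen2.


Section Gen3.
Variable C : numClosedFieldType.

Lemma sum_if_eq (V : nmodType) (I : finType) (i : I) (F : I -> V) :
  \sum_m (if i == m then F m else 0) = F i.
Proof.
rewrite (bigD1 i) //= eqxx big1 ?addr0 // => m /negbTE.
by rewrite eq_sym => ->.
Qed.

Lemma sum_if_eq' (V : nmodType) (I : finType) (i : I) (F : I -> V) :
  \sum_m (if m == i then F m else 0) = F i.
Proof. by under eq_bigr do rewrite eq_sym; exact: sum_if_eq. Qed.

Lemma adjmx_mxblock n k (B_ : 'I_k -> 'I_k -> 'M[C]_n) :
  adjmx (\mxblock_(i < k, j < k) B_ i j) = \mxblock_(i < k, j < k) adjmx (B_ j i).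
Proof. by apply/matrixP => i j; rewrite !mxE. Qed.

Lemma mulmxblockc m k (A B : 'I_k -> 'I_k -> 'M[C]_m) :
  \mxblock_(i < k, j < k) A i j *m \mxblock_(i < k, j < k) B i j =
  \mxblock_(i < k, j < k) \sum_l A i l *m B l j.
Proof. exact: (@mul_mxblock C k k k (fun _ => m) (fun _ => m) (fun _ => m)). Qed.

Variables (n k : nat) (K : 'I_k -> 'M[C]_n).

Definition krausM (M : 'M[C]_k) (X : 'M[C]_n) : 'M[C]_n :=
  \sum_i \sum_j M i j *: (K i *m X *m adjmx (K j)).

Definition kraus (X : 'M[C]_n) : 'M[C]_n := \sum_i K i *m X *m adjmx (K i).

Lemma kraus_M1 X : kraus X = krausM 1%:M X.
Proof.
apply: eq_bigr => i _.
under eq_bigr do rewrite mxE.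
rewrite (bigD1 i) //= eqxx scale1r big1 ?addr0 // => j /negbTE.
by rewrite eq_sym => ->; rewrite scale0r.
Qed.

Lemma linmap_krausM M : linmap (krausM M).
Proof.
move=> a X Y; rewrite /krausM scaler_sumr -big_split; apply: eq_bigr => i _.
rewrite scaler_sumr -big_split; apply: eq_bigr => j _.
rewrite mulmxDr mulmxDl -scalemxAr -scalemxAl scalerDr !scalerA mulrC //.
Qed.

Lemma linmap_kraus : linmap kraus.
Proof.
move=> a X Y; rewrite !kraus_M1; exact: linmap_krausM.
Qed.

Definition blockdiag k' (l : 'I_k) : 'M[C]_(\sum_(i < k') n) :=
  \mxblock_(i < k', j < k') (if i == j then K l else 0).

Lemma ampliation_kraus k' (X : 'M[C]_(\sum_(i < k') n)) :
  ampliation kraus X = \sum_l blockdiag k' l *m X *m adjmx (blockdiag k' l).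
Proof.
rewrite /ampliation.
have -> : \sum_l blockdiag k' l *m X *m adjmx (blockdiag k' l) =
    \sum_l \mxblock_(i < k', j < k') (K l *m submxblock X i j *m adjmx (K l)).
  apply: eq_bigr => l0 _.
  rewrite -{1}(submxblockK X) /blockdiag adjmx_mxblock !mulmxblockc.
  apply: eq_mxblock => i j.
  have E : forall j0, \sum_l (if i == l then K l0 else 0) *m submxblock X l j0 =
            K l0 *m submxblock X i j0.
    move=> j0; rewrite -(sum_if_eq i (fun l => K l0 *m submxblock X l j0)).
    by apply: eq_bigr => m _; case: (i == m); rewrite ?mul0mx.
  under eq_bigr => m _ do rewrite E.
  rewrite -(sum_if_eq j (fun m => K l0 *m submxblock X i m *m adjmx (K l0))).
  by apply: eq_bigr => m _; case: (j == m); rewrite ?adjmx0 ?mulmx0.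
by rewrite -mxblock_sum; apply: eq_mxblock => i j; rewrite /kraus.
Qed.

Lemma cp_kraus : completely_positive kraus.
Proof.
move=> k' X hX; rewrite ampliation_kraus; apply: psd_sum => l; exact: psd_conj.
Qed.

Lemma adjmx_sum_herm : adjmx (\sum_i adjmx (K i) *m K i) = \sum_i adjmx (K i) *m K i.
Proof. by rewrite adjmx_sum; apply: eq_bigr => i _; rewrite adjmxM adjmxK. Qed.

Lemma kraus1 : kraus 1%:M = \sum_i K i *m adjmx (K i).
Proof. by apply: eq_bigr => i _; rewrite mulmx1. Qed.

Lemma kraus_adj : hs_adjoint_at kraus 1%:M (\sum_i adjmx (K i) *m K i).
Proof.
move=> X; rewrite adjmx_sum_herm adjmx1 mul1mx /kraus mulmx_suml !raddf_sum.
by apply: eq_bigr => i _; rewrite /= [RHS]mxtrace_mulC !mulmxA.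
Qed.

Lemma CP_kraus : CPset (\sum_i adjmx (K i) *m K i) (\sum_i K i *m adjmx (K i)) kraus.
Proof. split; [exact: linmap_kraus|exact: cp_kraus|exact: kraus1|exact: kraus_adj]. Qed.

Definition Vmx : 'M[C]_(\sum_(r < n) n, k) :=
  \mxcol_(r < n) (\matrix_(a < n, l < k) K l a r).

Lemma adjmx_mxcol m (B_ : 'I_n -> 'M[C]_(m, k)) :
  adjmx (\mxcol_(r < n) B_ r) = \mxrow_(r < n) adjmx (B_ r).
Proof. by apply/matrixP => i j; rewrite !mxE. Qed.

Lemma mul_delta_entry (A B : 'M[C]_n) r s a b :
  (A *m delta_mx r s *m B) a b = A a r * B s b.
Proof.
rewrite -(@mul_delta_mx C n 1 n 0) mulmxA -colE -mulmxA -rowE mxE big_ord1 !mxE.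
done.
Qed.

Lemma choi_krausM M : choi_mx (krausM M) = Vmx *m M *m adjmx Vmx.
Proof.
rewrite /Vmx adjmx_mxcol.
rewrite (@mxcol_mul C n (fun _ => n) k k) (@mul_mxcol_mxrow C n n (fun _ => n) (fun _ => n)).
apply: eq_mxblock => r s; apply/matrixP => a b.
rewrite /krausM summxE mxE.
under eq_bigr do rewrite summxE.
under [RHS]eq_bigr do rewrite !mxE mulr_suml.
rewrite exchange_big; apply: eq_bigr => i _; apply: eq_bigr => j _.
by rewrite [in LHS]mxE mul_delta_entry !mxE mulrCA mulrA.
Qed.

End Gen3.


Section Gen4.
Variable C : numClosedFieldType.

Lemma adjmx_mxcol_gen n m k (B_ : 'I_n -> 'M[C]_(m, k)) :
  adjmx (\mxcol_(r < n) B_ r) = \mxrow_(r < n) adjmx (B_ r).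
Proof. by apply/matrixP => i j; rewrite !mxE. Qed.

Lemma choi_psd n (Phi : 'M[C]_n -> 'M[C]_n) :
  completely_positive Phi -> psdmx (choi_mx Phi).
Proof.
move=> cp.
pose w : 'M[C]_(\sum_(i < n) n, 1) := \mxcol_(i < n) (delta_mx i 0 : 'M[C]_(n, 1)).
have X0 : w *m adjmx w = \mxblock_(i < n, j < n) (delta_mx i j : 'M[C]_n).
  rewrite /w adjmx_mxcol_gen (@mul_mxcol_mxrow C n n (fun _ => n) (fun _ => n)).
  by apply: eq_mxblock => i j; rewrite adjmx_delta mul_delta_mx.
have := cp n _ (psd_mul_adj w); rewrite X0.
have -> : ampliation Phi (\mxblock_(i < n, j < n) (delta_mx i j : 'M[C]_n)) = choi_mx Phi.
  by rewrite /ampliation /choi_mx; apply: eq_mxblock => i j; rewrite mxblockK.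
done.
Qed.

Lemma linmap0 m (f : 'M[C]_m -> 'M[C]_m) : linmap f -> f 0 = 0.
Proof.
move=> h; have := h 1 0 0; rewrite !scale1r addr0 -{1}[f 0]add0r.
by move/addIr <-.
Qed.

Lemma linmapZ m (f : 'M[C]_m -> 'M[C]_m) a X : linmap f -> f (a *: X) = a *: f X.
Proof. by move=> h; have := h a X 0; rewrite addr0 (linmap0 h) addr0. Qed.

Lemma linmapD m (f : 'M[C]_m -> 'M[C]_m) X Y : linmap f -> f (X + Y) = f X + f Y.
Proof. by move=> h; have := h 1 X Y; rewrite !scale1r. Qed.

Lemma linmap_sum m (f : 'M[C]_m -> 'M[C]_m) (I : finType) (F : I -> 'M[C]_m) :
  linmap f -> f (\sum_i F i) = \sum_i f (F i).
Proof.
move=> h; apply: (big_morph f); [by move=> x y; exact: linmapD | exact: linmap0].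
Qed.

Lemma linmap_eq m (f g : 'M[C]_m -> 'M[C]_m) : linmap f -> linmap g ->
  (forall r s, f (delta_mx r s) = g (delta_mx r s)) -> forall X, f X = g X.
Proof.
move=> hf hg e X; rewrite (matrix_sum_delta X) !linmap_sum //.
apply: eq_bigr => i _; rewrite !linmap_sum //; apply: eq_bigr => j _.
by rewrite !linmapZ // e.
Qed.

Lemma mul_delta_col m p (A : 'M[C]_(m, p)) i j : (A *m (delta_mx j 0 : 'M[C]_(p, 1))) i 0 = A i j.
Proof. by rewrite -colE mxE. Qed.

Lemma trace_nondeg m (Y : 'M[C]_m) : (forall X, \tr (Y *m X) = 0) -> Y = 0.
Proof.
move=> h; apply/matrixP => i j; rewrite mxE -(h (delta_mx j i)).
rewrite /mxtrace; under eq_bigr do rewrite -[Y *m _]mulmx1 mul_delta_entry mxE.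
rewrite (bigD1 i) //= eqxx mulr1 big1 ?addr0 // => a /negbTE.
by rewrite eq_sym => ->; rewrite mulr0.
Qed.

Lemma sum_delta2 (V : lmodType C) k (F : 'I_k -> 'I_k -> V) :
  \sum_i \sum_j (1%:M : 'M[C]_k) i j *: F i j = \sum_i F i i.
Proof.
apply: eq_bigr => i _; under eq_bigr do rewrite mxE.
rewrite (bigD1 i) //= eqxx scale1r big1 ?addr0 // => j /negbTE.
by rewrite eq_sym => ->; rewrite scale0r.
Qed.

Lemma choi_ext n (f g : 'M[C]_n -> 'M[C]_n) : (forall X, f X = g X) -> choi_mx f = choi_mx g.
Proof. by move=> e; apply: eq_mxblock => i j. Qed.

Lemma mxtrace_sum m (I : finType) (F : I -> 'M[C]_m) :
  \tr (\sum_i F i) = \sum_i \tr (F i).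
Proof. exact: (big_morph _ (@mxtraceD _ _) (mxtrace0 _ _)). Qed.

Lemma tr_krausM n k (K : 'I_k -> 'M[C]_n) M X :
  \tr (krausM K M X) = \tr ((\sum_i \sum_j M i j *: (adjmx (K j) *m K i)) *m X).
Proof.
rewrite /krausM mulmx_suml !mxtrace_sum; apply: eq_bigr => i _.
rewrite mulmx_suml !mxtrace_sum; apply: eq_bigr => j _.
by rewrite -scalemxAl !mxtraceZ [in LHS]mxtrace_mulC !mulmxA.
Qed.

Lemma sumB2 (V : lmodType C) k (M N : 'M[C]_k) (F : 'I_k -> 'I_k -> V) :
  \sum_i \sum_j (M - N) i j *: F i j =
  \sum_i \sum_j M i j *: F i j - \sum_i \sum_j N i j *: F i j.
Proof.
rewrite -sumrB; apply: eq_bigr => i _; rewrite -sumrB; apply: eq_bigr => j _.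
by rewrite !mxE scalerBl.
Qed.

Variables (n k : nat) (K : 'I_k -> 'M[C]_n) (L : 'M[C]_(k, \sum_(r < n) n)).
Hypothesis hL : L *m Vmx K = 1%:M.
Hypothesis hind : forall c : 'M[C]_k,
  \sum_i \sum_j c i j *: (adjmx (K j) *m K i) = 0 ->
  \sum_i \sum_j c i j *: (K i *m adjmx (K j)) = 0 -> c = 0.

Local Notation A := (\sum_i adjmx (K i) *m K i).
Local Notation B := (\sum_i K i *m adjmx (K i)).

Lemma face_eq (Phi1 Phi2 : 'M[C]_n -> 'M[C]_n) (t : C) :
  CPset A B Phi1 -> completely_positive Phi2 -> 0 < t -> 0 <= 1 - t ->
  (forall X, kraus K X = t *: Phi1 X + (1 - t) *: Phi2 X) ->
  forall X, Phi1 X = kraus K X.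
Proof.
case=> lin1 cp1 e1 adj1 cp2 t0 t1 hE.
have psd1 := choi_psd cp1; have psd2 := choi_psd cp2.
have hC : choi_mx (kraus K) = t *: choi_mx Phi1 + (1 - t) *: choi_mx Phi2.
  rewrite (choi_ext hE) /choi_mx.
  rewrite (@mxblockD _ n n (fun _ => n) (fun _ => n)).
  by congr (_ + _); apply/matrixP => a b; rewrite !mxE.
have hK : choi_mx (kraus K) = Vmx K *m adjmx (Vmx K).
  by rewrite (choi_ext (kraus_M1 K)) choi_krausM mulmx1.
have hker : forall u : 'cV[C]_(\sum_(r < n) n), adjmx (Vmx K) *m u = 0 -> choi_mx Phi1 *m u = 0.
  move=> u hu; apply: (psd_form0 psd1).
  have q0 : (adjmx u *m choi_mx (kraus K) *m u) 0 0 = 0.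
    by rewrite hK mulmxA -mulmxA -[adjmx u *m _]adjmxK adjmxM adjmxK hu adjmx0 mul0mx mxE.
  rewrite hC mulmxDr mulmxDl -!scalemxAr -!scalemxAl mxE [X in _ + X]mxE in q0.
  rewrite [X in X + _]mxE in q0.
  move/eqP: q0; rewrite paddr_eq0 ?mulr_ge0 ?(ltW t0) //; last exact: psd2.2.
    by case/andP; rewrite mulf_eq0 (gt_eqF t0) /= => /eqP.
  exact: psd1.2.
pose U := 1%:M - adjmx L *m adjmx (Vmx K).
have hU : adjmx (Vmx K) *m U = 0.
  by rewrite /U mulmxBr mulmx1 mulmxA -adjmxM hL adjmx1 mul1mx subrr.
have hCU : choi_mx Phi1 *m U = 0.
  apply/matrixP => a b; rewrite -mul_delta_col -mulmxA hker ?mxE //.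
  by rewrite mulmxA hU mul0mx.
have hC1 : choi_mx Phi1 = choi_mx Phi1 *m adjmx L *m adjmx (Vmx K).
  by apply/eqP; rewrite -subr_eq0 -mulmxA -{1}[choi_mx Phi1]mulmx1 -mulmxBr hCU.
have hC2 : choi_mx Phi1 = Vmx K *m L *m choi_mx Phi1.
  by rewrite -{1}psd1.1 {1}hC1 !adjmxM !adjmxK psd1.1 mulmxA.
pose M := L *m choi_mx Phi1 *m adjmx L.
have hC3 : choi_mx Phi1 = choi_mx (krausM K M).
  by rewrite choi_krausM /M {1}hC2 {1}hC1 !mulmxA.
have hPhi1 : forall X, Phi1 X = krausM K M X.
  apply: linmap_eq => //; first exact: linmap_krausM.
  move=> r s.
  exact: (proj2 (@eq_mxblockP C n n (fun _ => n) (fun _ => n)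
     (fun r s => Phi1 (delta_mx r s)) (fun r s => krausM K M (delta_mx r s))) hC3 r s).
have hB : \sum_i \sum_j M i j *: (K i *m adjmx (K j)) = B.
  rewrite -e1 hPhi1 /krausM; apply: eq_bigr => i _; apply: eq_bigr => j _.
  by rewrite mulmx1.
have hA : \sum_i \sum_j M i j *: (adjmx (K j) *m K i) = A.
  apply/eqP; rewrite -subr_eq0; apply/eqP; apply: trace_nondeg => X.
  rewrite mulmxBl raddfB /= -tr_krausM -hPhi1 -[Phi1 X]mul1mx -adjmx1 -adj1 adjmx_sum_herm subrr //.
have hM : M = 1%:M.
  apply/eqP; rewrite -subr_eq0; apply/eqP; apply: hind.
    by rewrite sumB2 hA sum_delta2 subrr.
  by rewrite sumB2 hB sum_delta2 subrr.
by move=> X; rewrite hPhi1 hM kraus_M1.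
Qed.

Lemma extreme_kraus : extreme_point (CPset A B) (kraus K).
Proof.
split; first exact: CP_kraus.
case=> t [Phi1 [Phi2 [/andP[t0 t1] h1 h2 hne hE]]].
have hE' : forall X, kraus K X = t *: Phi1 X + (1 - t) *: Phi2 X.
  by move=> X; rewrite hE.
have cp1 : completely_positive Phi1 by case: h1.
have cp2 : completely_positive Phi2 by case: h2.
have t1' : 0 <= 1 - t by rewrite subr_ge0 ltW.
have e1 := face_eq h1 cp2 t0 t1' hE'.
have t0' : 0 < 1 - t by rewrite subr_gt0.
have t1'' : 0 <= 1 - (1 - t) by rewrite subKr ltW.
have hE2 : forall X, kraus K X = (1 - t) *: Phi2 X + (1 - (1 - t)) *: Phi1 X.
  by move=> X; rewrite hE' subKr addrC.
have e2 := face_eq h2 cp1 t0' t1'' hE2.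
by apply: hne; apply: functional_extensionality => X; rewrite e1 e2.
Qed.

Lemma rank_kraus : choi_rank (kraus K) = k.
Proof.
rewrite /choi_rank (choi_ext (kraus_M1 K)) choi_krausM mulmx1.
apply/eqP; rewrite eqn_leq; apply/andP; split.
  by apply: leq_trans (mxrankM_maxl _ _) (rank_leq_col _).
have E : L *m (Vmx K *m adjmx (Vmx K)) *m adjmx L = 1%:M.
  by rewrite mulmxA -mulmxA -adjmxM hL adjmx1 mulmx1.
apply: (@leq_trans (\rank (L *m (Vmx K *m adjmx (Vmx K)) *m adjmx L))).
  by rewrite E mxrank1.
by apply: leq_trans (mxrankM_maxl _ _) (mxrankM_maxr _ _).
Qed.

End Gen4.


Section Concrete.
Variable C : numClosedFieldType.

Lemma D_mxE (i j : 'I_6) :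
  D_mx C i j = if i == j then (if (i < 3)%N then 9^-1 else 2 / 9) else 0.
Proof.
rewrite /D_mx /tensmx !mxE.
case: i => [[|[|[|[|[|[|i]]]]]] Hi] //; case: j => [[|[|[|[|[|[|j]]]]]] Hj] //=.
all: by field.
Qed.

Definition colf (a b : nat) : nat :=
  match a, b with
  | 0, 0 => 0
  | 0, 2 => 4
  | 0, 5 => 5
  | 1, 0 => 2
  | 1, 4 => 3
  | 2, 3 => 0
  | 2, 5 => 7
  | 3, 0 => 6
  | 3, 1 => 5
  | 3, 3 => 3
  | 4, 2 => 6
  | 4, 3 => 1
  | 4, 4 => 7
  | 5, 1 => 1
  | 5, 4 => 4
  | 5, 5 => 2
  | _, _ => 0
  end.

Definition wnf (a b : nat) : nat :=
  match a, b with
  | 0, 0 => 5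
  | 0, 2 => 1
  | 0, 5 => 3
  | 1, 0 => 1
  | 1, 4 => 8
  | 2, 3 => 1
  | 2, 5 => 8
  | 3, 0 => 3
  | 3, 1 => 2
  | 3, 3 => 13
  | 4, 2 => 8
  | 4, 3 => 4
  | 4, 4 => 6
  | 5, 1 => 7
  | 5, 4 => 4
  | 5, 5 => 7
  | _, _ => 0
  end.

Definition ord8 (k : nat) : 'I_8 :=
  match k with
  | 0 => @Ordinal 8 0 isT
  | 1 => @Ordinal 8 1 isT
  | 2 => @Ordinal 8 2 isT
  | 3 => @Ordinal 8 3 isT
  | 4 => @Ordinal 8 4 isT
  | 5 => @Ordinal 8 5 isT
  | 6 => @Ordinal 8 6 isT
  | _ => @Ordinal 8 7 isT
  end.

Definition col (a b : 'I_6) : 'I_8 := ord8 (colf a b).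
Definition sq (m : nat) : C := sqrtC (m%:R / 81).
Arguments sq : simpl never.
Definition xx (a b : 'I_6) : C := sq (wnf a b).
Definition Kc (l : 'I_8) : 'M[C]_6 := \matrix_(a, b) (if col a b == l then xx a b else 0).

Lemma sq0 : sq 0 = 0.
Proof. by rewrite /sq mul0r sqrtC0. Qed.

Lemma sq_ge0 m : 0 <= sq m.
Proof. by rewrite /sq sqrtC_ge0 divr_ge0 ?ler0n. Qed.

Lemma conj_sq m : (sq m)^* = sq m.
Proof. exact: geC0_conj (sq_ge0 m). Qed.

Lemma sqK m : sq m * sq m = m%:R / 81.
Proof. by rewrite -expr2 /sq sqrtCK. Qed.

Lemma sq_neq0 m : (0 < m)%N -> sq m != 0.
Proof.
move=> hm; rewrite /sq sqrtC_eq0 mulf_eq0 invr_eq0 negb_or.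
by rewrite !pnatr_eq0 -!lt0n hm.
Qed.

Lemma big6 (F : 'I_6 -> C) :
  \sum_(a < 6) F a = F (@Ordinal 6 0 isT) + F (@Ordinal 6 1 isT) + F (@Ordinal 6 2 isT)
     + F (@Ordinal 6 3 isT) + F (@Ordinal 6 4 isT) + F (@Ordinal 6 5 isT).
Proof.
rewrite !big_ord_recr big_ord0 /= add0r.
by repeat f_equal; apply: val_inj.
Qed.

Lemma sum_if2 (V : nmodType) k (i0 j0 : 'I_k) (F : 'I_k -> 'I_k -> V) :
  \sum_i \sum_j (if i0 == i then (if j0 == j then F i j else 0) else 0) = F i0 j0.
Proof.
rewrite -(sum_if_eq i0 (fun i => F i j0)); apply: eq_bigr => i _.
by case: (i0 == i); rewrite ?sum_if_eq // big1.
Qed.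

Lemma F1E (c : 'M[C]_8) b b' :
  (\sum_i \sum_j c i j *: (adjmx (Kc j) *m Kc i)) b b' =
  \sum_a c (col a b') (col a b) * ((xx a b)^* * xx a b').
Proof.
rewrite summxE; under eq_bigr do rewrite summxE.
have E : forall i j, (c i j *: (adjmx (Kc j) *m Kc i)) b b' =
    \sum_a (if col a b' == i then (if col a b == j then c i j * ((xx a b)^* * xx a b') else 0) else 0).
  move=> i j; rewrite !mxE mulr_sumr; apply: eq_bigr => a _; rewrite !mxE.
  by case: (col a b' == i); case: (col a b == j); rewrite ?conjC0 ?mul0r ?mulr0.
under eq_bigr => i _ do under eq_bigr => j _ do rewrite E.
under eq_bigr do rewrite exchange_big.
rewrite exchange_big; apply: eq_bigr => a _.
exact: (sum_if2 (col a b') (col a b) (fun i j => c i j * ((xx a b)^* * xx a b'))).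
Qed.

Lemma F2E (c : 'M[C]_8) a a' :
  (\sum_i \sum_j c i j *: (Kc i *m adjmx (Kc j))) a a' =
  \sum_b c (col a b) (col a' b) * (xx a b * (xx a' b)^*).
Proof.
rewrite summxE; under eq_bigr do rewrite summxE.
have E : forall i j, (c i j *: (Kc i *m adjmx (Kc j))) a a' =
    \sum_b (if col a b == i then (if col a' b == j then c i j * (xx a b * (xx a' b)^*) else 0) else 0).
  move=> i j; rewrite !mxE mulr_sumr; apply: eq_bigr => b _; rewrite !mxE.
  by case: (col a b == i); case: (col a' b == j); rewrite ?conjC0 ?mul0r ?mulr0.
under eq_bigr => i _ do under eq_bigr => j _ do rewrite E.
under eq_bigr do rewrite exchange_big.
rewrite exchange_big; apply: eq_bigr => b _.
exact: (sum_if2 (col a b) (col a' b) (fun i j => c i j * (xx a b * (xx a' b)^*))).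
Qed.

Lemma sumAK : \sum_l adjmx (Kc l) *m Kc l = D_mx C.
Proof.
rewrite -(sum_delta2 (fun i j => adjmx (Kc j) *m Kc i)).
apply/matrixP => b b'; rewrite F1E D_mxE big6.
case: b => [[|[|[|[|[|[|b]]]]]] Hb] //; case: b' => [[|[|[|[|[|[|b']]]]]] Hb'] //=.
all: rewrite !mxE /xx /=.
all: rewrite ?sq0 ?conjC0 ?conj_sq ?sqK ?mul0r ?mulr0 ?mul1r ?add0r ?addr0.
all: first [done | by field].
Qed.

Lemma sumBK : \sum_l Kc l *m adjmx (Kc l) = D_mx C.
Proof.
rewrite -(sum_delta2 (fun i j => Kc i *m adjmx (Kc j))).
apply/matrixP => b b'; rewrite F2E D_mxE big6.
case: b => [[|[|[|[|[|[|b]]]]]] Hb] //; case: b' => [[|[|[|[|[|[|b']]]]]] Hb'] //=.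
all: rewrite !mxE /xx /=.
all: rewrite ?sq0 ?conjC0 ?conj_sq ?sqK ?mul0r ?mulr0 ?mul1r ?add0r ?addr0.
all: first [done | by field].
Qed.

End Concrete.


Section Concrete2.
Variable C : numClosedFieldType.
Local Notation Kc := (@Kc C).
Local Notation xx := (@xx C).
Local Notation sq := (@sq C).

Lemma wit_lemma (x : C) m m' : x * (sq m * sq m') = 0 -> (0 < m)%N -> (0 < m')%N -> x = 0.
Proof.
move=> /eqP; rewrite !mulf_eq0 => /orP[/eqP //|/orP[]] /eqP h hm hm'.
  by move: (sq_neq0 C hm); rewrite h eqxx.
by move: (sq_neq0 C hm'); rewrite h eqxx.
Qed.

Lemma lin12 (l1 l2 l3 l4 l5 l6 l7 l8 l9 l10 l11 l12 x1 x2 x3 x4 x5 x6 x7 x8 x9 x10 x11 x12 : C) : x1 = 0 -> x2 = 0 -> x3 = 0 -> x4 = 0 -> x5 = 0 -> x6 = 0 -> x7 = 0 -> x8 = 0 -> x9 = 0 -> x10 = 0 -> x11 = 0 -> x12 = 0 -> l1 * x1 + l2 * x2 + l3 * x3 + l4 * x4 + l5 * x5 + l6 * x6 + l7 * x7 + l8 * x8 + l9 * x9 + l10 * x10 + l11 * x11 + l12 * x12 = 0.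
Proof. by do 12 move=> ->; rewrite !mulr0 !addr0. Qed.

Lemma indK (c : 'M[C]_8) :
  \sum_i \sum_j c i j *: (adjmx (Kc j) *m Kc i) = 0 ->
  \sum_i \sum_j c i j *: (Kc i *m adjmx (Kc j)) = 0 -> c = 0.
Proof.
move=> h1 h2.
have e1 : forall b b', \sum_a c (col a b') (col a b) * ((xx a b)^* * xx a b') = 0.
  by move=> b b'; rewrite -F1E h1 mxE.
have e2 : forall a a', \sum_b c (col a b) (col a' b) * (xx a b * (xx a' b)^*) = 0.
  by move=> a a'; rewrite -F2E h2 mxE.
have W01 : c (@Ordinal 8 0 isT) (@Ordinal 8 1 isT) = 0.
  have := e2 (@Ordinal 6 2 isT) (@Ordinal 6 4 isT); rewrite big6 /xx /= ?sq0 ?conjC0 ?conj_sq ?mul0r ?mulr0 ?add0r ?addr0.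
  by move=> H; apply: (wit_lemma H).
have W02 : c (@Ordinal 8 0 isT) (@Ordinal 8 2 isT) = 0.
  have := e2 (@Ordinal 6 0 isT) (@Ordinal 6 1 isT); rewrite big6 /xx /= ?sq0 ?conjC0 ?conj_sq ?mul0r ?mulr0 ?add0r ?addr0.
  by move=> H; apply: (wit_lemma H).
have W03 : c (@Ordinal 8 0 isT) (@Ordinal 8 3 isT) = 0.
  have := e2 (@Ordinal 6 2 isT) (@Ordinal 6 3 isT); rewrite big6 /xx /= ?sq0 ?conjC0 ?conj_sq ?mul0r ?mulr0 ?add0r ?addr0.
  by move=> H; apply: (wit_lemma H).
have W04 : c (@Ordinal 8 0 isT) (@Ordinal 8 4 isT) = 0.
  have := e1 (@Ordinal 6 2 isT) (@Ordinal 6 0 isT); rewrite big6 /xx /= ?sq0 ?conjC0 ?conj_sq ?mul0r ?mulr0 ?add0r ?addr0.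
  by move=> H; apply: (wit_lemma H).
have W05 : c (@Ordinal 8 0 isT) (@Ordinal 8 5 isT) = 0.
  have := e1 (@Ordinal 6 5 isT) (@Ordinal 6 0 isT); rewrite big6 /xx /= ?sq0 ?conjC0 ?conj_sq ?mul0r ?mulr0 ?add0r ?addr0.
  by move=> H; apply: (wit_lemma H).
have W06 : c (@Ordinal 8 0 isT) (@Ordinal 8 6 isT) = 0.
  have := e2 (@Ordinal 6 0 isT) (@Ordinal 6 3 isT); rewrite big6 /xx /= ?sq0 ?conjC0 ?conj_sq ?mul0r ?mulr0 ?add0r ?addr0.
  by move=> H; apply: (wit_lemma H).
have W07 : c (@Ordinal 8 0 isT) (@Ordinal 8 7 isT) = 0.
  have := e1 (@Ordinal 6 5 isT) (@Ordinal 6 3 isT); rewrite big6 /xx /= ?sq0 ?conjC0 ?conj_sq ?mul0r ?mulr0 ?add0r ?addr0.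
  by move=> H; apply: (wit_lemma H).
have W10 : c (@Ordinal 8 1 isT) (@Ordinal 8 0 isT) = 0.
  have := e2 (@Ordinal 6 4 isT) (@Ordinal 6 2 isT); rewrite big6 /xx /= ?sq0 ?conjC0 ?conj_sq ?mul0r ?mulr0 ?add0r ?addr0.
  by move=> H; apply: (wit_lemma H).
have W12 : c (@Ordinal 8 1 isT) (@Ordinal 8 2 isT) = 0.
  have := e1 (@Ordinal 6 5 isT) (@Ordinal 6 1 isT); rewrite big6 /xx /= ?sq0 ?conjC0 ?conj_sq ?mul0r ?mulr0 ?add0r ?addr0.
  by move=> H; apply: (wit_lemma H).
have W13 : c (@Ordinal 8 1 isT) (@Ordinal 8 3 isT) = 0.
  have := e2 (@Ordinal 6 4 isT) (@Ordinal 6 3 isT); rewrite big6 /xx /= ?sq0 ?conjC0 ?conj_sq ?mul0r ?mulr0 ?add0r ?addr0.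
  by move=> H; apply: (wit_lemma H).
have W14 : c (@Ordinal 8 1 isT) (@Ordinal 8 4 isT) = 0.
  have := e1 (@Ordinal 6 4 isT) (@Ordinal 6 1 isT); rewrite big6 /xx /= ?sq0 ?conjC0 ?conj_sq ?mul0r ?mulr0 ?add0r ?addr0.
  by move=> H; apply: (wit_lemma H).
have W15 : c (@Ordinal 8 1 isT) (@Ordinal 8 5 isT) = 0.
  have := e2 (@Ordinal 6 5 isT) (@Ordinal 6 3 isT); rewrite big6 /xx /= ?sq0 ?conjC0 ?conj_sq ?mul0r ?mulr0 ?add0r ?addr0.
  by move=> H; apply: (wit_lemma H).
have W16 : c (@Ordinal 8 1 isT) (@Ordinal 8 6 isT) = 0.
  have := e1 (@Ordinal 6 2 isT) (@Ordinal 6 3 isT); rewrite big6 /xx /= ?sq0 ?conjC0 ?conj_sq ?mul0r ?mulr0 ?add0r ?addr0.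
  by move=> H; apply: (wit_lemma H).
have W17 : c (@Ordinal 8 1 isT) (@Ordinal 8 7 isT) = 0.
  have := e1 (@Ordinal 6 4 isT) (@Ordinal 6 3 isT); rewrite big6 /xx /= ?sq0 ?conjC0 ?conj_sq ?mul0r ?mulr0 ?add0r ?addr0.
  by move=> H; apply: (wit_lemma H).
have W20 : c (@Ordinal 8 2 isT) (@Ordinal 8 0 isT) = 0.
  have := e2 (@Ordinal 6 1 isT) (@Ordinal 6 0 isT); rewrite big6 /xx /= ?sq0 ?conjC0 ?conj_sq ?mul0r ?mulr0 ?add0r ?addr0.
  by move=> H; apply: (wit_lemma H).
have W21 : c (@Ordinal 8 2 isT) (@Ordinal 8 1 isT) = 0.
  have := e1 (@Ordinal 6 1 isT) (@Ordinal 6 5 isT); rewrite big6 /xx /= ?sq0 ?conjC0 ?conj_sq ?mul0r ?mulr0 ?add0r ?addr0.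
  by move=> H; apply: (wit_lemma H).
have W23 : c (@Ordinal 8 2 isT) (@Ordinal 8 3 isT) = 0.
  have := e1 (@Ordinal 6 4 isT) (@Ordinal 6 0 isT); rewrite big6 /xx /= ?sq0 ?conjC0 ?conj_sq ?mul0r ?mulr0 ?add0r ?addr0.
  by move=> H; apply: (wit_lemma H).
have W24 : c (@Ordinal 8 2 isT) (@Ordinal 8 4 isT) = 0.
  have := e1 (@Ordinal 6 4 isT) (@Ordinal 6 5 isT); rewrite big6 /xx /= ?sq0 ?conjC0 ?conj_sq ?mul0r ?mulr0 ?add0r ?addr0.
  by move=> H; apply: (wit_lemma H).
have W25 : c (@Ordinal 8 2 isT) (@Ordinal 8 5 isT) = 0.
  have := e2 (@Ordinal 6 5 isT) (@Ordinal 6 0 isT); rewrite big6 /xx /= ?sq0 ?conjC0 ?conj_sq ?mul0r ?mulr0 ?add0r ?addr0.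
  by move=> H; apply: (wit_lemma H).
have W26 : c (@Ordinal 8 2 isT) (@Ordinal 8 6 isT) = 0.
  have := e2 (@Ordinal 6 1 isT) (@Ordinal 6 3 isT); rewrite big6 /xx /= ?sq0 ?conjC0 ?conj_sq ?mul0r ?mulr0 ?add0r ?addr0.
  by move=> H; apply: (wit_lemma H).
have W27 : c (@Ordinal 8 2 isT) (@Ordinal 8 7 isT) = 0.
  have := e2 (@Ordinal 6 5 isT) (@Ordinal 6 2 isT); rewrite big6 /xx /= ?sq0 ?conjC0 ?conj_sq ?mul0r ?mulr0 ?add0r ?addr0.
  by move=> H; apply: (wit_lemma H).
have W30 : c (@Ordinal 8 3 isT) (@Ordinal 8 0 isT) = 0.
  have := e2 (@Ordinal 6 3 isT) (@Ordinal 6 2 isT); rewrite big6 /xx /= ?sq0 ?conjC0 ?conj_sq ?mul0r ?mulr0 ?add0r ?addr0.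
  by move=> H; apply: (wit_lemma H).
have W31 : c (@Ordinal 8 3 isT) (@Ordinal 8 1 isT) = 0.
  have := e2 (@Ordinal 6 3 isT) (@Ordinal 6 4 isT); rewrite big6 /xx /= ?sq0 ?conjC0 ?conj_sq ?mul0r ?mulr0 ?add0r ?addr0.
  by move=> H; apply: (wit_lemma H).
have W32 : c (@Ordinal 8 3 isT) (@Ordinal 8 2 isT) = 0.
  have := e1 (@Ordinal 6 0 isT) (@Ordinal 6 4 isT); rewrite big6 /xx /= ?sq0 ?conjC0 ?conj_sq ?mul0r ?mulr0 ?add0r ?addr0.
  by move=> H; apply: (wit_lemma H).
have W34 : c (@Ordinal 8 3 isT) (@Ordinal 8 4 isT) = 0.
  have := e2 (@Ordinal 6 1 isT) (@Ordinal 6 5 isT); rewrite big6 /xx /= ?sq0 ?conjC0 ?conj_sq ?mul0r ?mulr0 ?add0r ?addr0.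
  by move=> H; apply: (wit_lemma H).
have W35 : c (@Ordinal 8 3 isT) (@Ordinal 8 5 isT) = 0.
  have := e1 (@Ordinal 6 1 isT) (@Ordinal 6 3 isT); rewrite big6 /xx /= ?sq0 ?conjC0 ?conj_sq ?mul0r ?mulr0 ?add0r ?addr0.
  by move=> H; apply: (wit_lemma H).
have W36 : c (@Ordinal 8 3 isT) (@Ordinal 8 6 isT) = 0.
  have := e1 (@Ordinal 6 0 isT) (@Ordinal 6 3 isT); rewrite big6 /xx /= ?sq0 ?conjC0 ?conj_sq ?mul0r ?mulr0 ?add0r ?addr0.
  by move=> H; apply: (wit_lemma H).
have W37 : c (@Ordinal 8 3 isT) (@Ordinal 8 7 isT) = 0.
  have := e2 (@Ordinal 6 1 isT) (@Ordinal 6 4 isT); rewrite big6 /xx /= ?sq0 ?conjC0 ?conj_sq ?mul0r ?mulr0 ?add0r ?addr0.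
  by move=> H; apply: (wit_lemma H).
have W40 : c (@Ordinal 8 4 isT) (@Ordinal 8 0 isT) = 0.
  have := e1 (@Ordinal 6 0 isT) (@Ordinal 6 2 isT); rewrite big6 /xx /= ?sq0 ?conjC0 ?conj_sq ?mul0r ?mulr0 ?add0r ?addr0.
  by move=> H; apply: (wit_lemma H).
have W41 : c (@Ordinal 8 4 isT) (@Ordinal 8 1 isT) = 0.
  have := e1 (@Ordinal 6 1 isT) (@Ordinal 6 4 isT); rewrite big6 /xx /= ?sq0 ?conjC0 ?conj_sq ?mul0r ?mulr0 ?add0r ?addr0.
  by move=> H; apply: (wit_lemma H).
have W42 : c (@Ordinal 8 4 isT) (@Ordinal 8 2 isT) = 0.
  have := e1 (@Ordinal 6 5 isT) (@Ordinal 6 4 isT); rewrite big6 /xx /= ?sq0 ?conjC0 ?conj_sq ?mul0r ?mulr0 ?add0r ?addr0.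
  by move=> H; apply: (wit_lemma H).
have W43 : c (@Ordinal 8 4 isT) (@Ordinal 8 3 isT) = 0.
  have := e2 (@Ordinal 6 5 isT) (@Ordinal 6 1 isT); rewrite big6 /xx /= ?sq0 ?conjC0 ?conj_sq ?mul0r ?mulr0 ?add0r ?addr0.
  by move=> H; apply: (wit_lemma H).
have W45 : c (@Ordinal 8 4 isT) (@Ordinal 8 5 isT) = 0.
  have := e1 (@Ordinal 6 5 isT) (@Ordinal 6 2 isT); rewrite big6 /xx /= ?sq0 ?conjC0 ?conj_sq ?mul0r ?mulr0 ?add0r ?addr0.
  by move=> H; apply: (wit_lemma H).
have W46 : c (@Ordinal 8 4 isT) (@Ordinal 8 6 isT) = 0.
  have := e2 (@Ordinal 6 0 isT) (@Ordinal 6 4 isT); rewrite big6 /xx /= ?sq0 ?conjC0 ?conj_sq ?mul0r ?mulr0 ?add0r ?addr0.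
  by move=> H; apply: (wit_lemma H).
have W47 : c (@Ordinal 8 4 isT) (@Ordinal 8 7 isT) = 0.
  have := e2 (@Ordinal 6 5 isT) (@Ordinal 6 4 isT); rewrite big6 /xx /= ?sq0 ?conjC0 ?conj_sq ?mul0r ?mulr0 ?add0r ?addr0.
  by move=> H; apply: (wit_lemma H).
have W50 : c (@Ordinal 8 5 isT) (@Ordinal 8 0 isT) = 0.
  have := e1 (@Ordinal 6 0 isT) (@Ordinal 6 5 isT); rewrite big6 /xx /= ?sq0 ?conjC0 ?conj_sq ?mul0r ?mulr0 ?add0r ?addr0.
  by move=> H; apply: (wit_lemma H).
have W51 : c (@Ordinal 8 5 isT) (@Ordinal 8 1 isT) = 0.
  have := e2 (@Ordinal 6 3 isT) (@Ordinal 6 5 isT); rewrite big6 /xx /= ?sq0 ?conjC0 ?conj_sq ?mul0r ?mulr0 ?add0r ?addr0.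
  by move=> H; apply: (wit_lemma H).
have W52 : c (@Ordinal 8 5 isT) (@Ordinal 8 2 isT) = 0.
  have := e2 (@Ordinal 6 0 isT) (@Ordinal 6 5 isT); rewrite big6 /xx /= ?sq0 ?conjC0 ?conj_sq ?mul0r ?mulr0 ?add0r ?addr0.
  by move=> H; apply: (wit_lemma H).
have W53 : c (@Ordinal 8 5 isT) (@Ordinal 8 3 isT) = 0.
  have := e1 (@Ordinal 6 3 isT) (@Ordinal 6 1 isT); rewrite big6 /xx /= ?sq0 ?conjC0 ?conj_sq ?mul0r ?mulr0 ?add0r ?addr0.
  by move=> H; apply: (wit_lemma H).
have W54 : c (@Ordinal 8 5 isT) (@Ordinal 8 4 isT) = 0.
  have := e1 (@Ordinal 6 2 isT) (@Ordinal 6 5 isT); rewrite big6 /xx /= ?sq0 ?conjC0 ?conj_sq ?mul0r ?mulr0 ?add0r ?addr0.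
  by move=> H; apply: (wit_lemma H).
have W56 : c (@Ordinal 8 5 isT) (@Ordinal 8 6 isT) = 0.
  have := e1 (@Ordinal 6 0 isT) (@Ordinal 6 1 isT); rewrite big6 /xx /= ?sq0 ?conjC0 ?conj_sq ?mul0r ?mulr0 ?add0r ?addr0.
  by move=> H; apply: (wit_lemma H).
have W57 : c (@Ordinal 8 5 isT) (@Ordinal 8 7 isT) = 0.
  have := e2 (@Ordinal 6 0 isT) (@Ordinal 6 2 isT); rewrite big6 /xx /= ?sq0 ?conjC0 ?conj_sq ?mul0r ?mulr0 ?add0r ?addr0.
  by move=> H; apply: (wit_lemma H).
have W60 : c (@Ordinal 8 6 isT) (@Ordinal 8 0 isT) = 0.
  have := e2 (@Ordinal 6 3 isT) (@Ordinal 6 0 isT); rewrite big6 /xx /= ?sq0 ?conjC0 ?conj_sq ?mul0r ?mulr0 ?add0r ?addr0.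
  by move=> H; apply: (wit_lemma H).
have W61 : c (@Ordinal 8 6 isT) (@Ordinal 8 1 isT) = 0.
  have := e1 (@Ordinal 6 3 isT) (@Ordinal 6 2 isT); rewrite big6 /xx /= ?sq0 ?conjC0 ?conj_sq ?mul0r ?mulr0 ?add0r ?addr0.
  by move=> H; apply: (wit_lemma H).
have W62 : c (@Ordinal 8 6 isT) (@Ordinal 8 2 isT) = 0.
  have := e2 (@Ordinal 6 3 isT) (@Ordinal 6 1 isT); rewrite big6 /xx /= ?sq0 ?conjC0 ?conj_sq ?mul0r ?mulr0 ?add0r ?addr0.
  by move=> H; apply: (wit_lemma H).
have W63 : c (@Ordinal 8 6 isT) (@Ordinal 8 3 isT) = 0.
  have := e1 (@Ordinal 6 3 isT) (@Ordinal 6 0 isT); rewrite big6 /xx /= ?sq0 ?conjC0 ?conj_sq ?mul0r ?mulr0 ?add0r ?addr0.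
  by move=> H; apply: (wit_lemma H).
have W64 : c (@Ordinal 8 6 isT) (@Ordinal 8 4 isT) = 0.
  have := e2 (@Ordinal 6 4 isT) (@Ordinal 6 0 isT); rewrite big6 /xx /= ?sq0 ?conjC0 ?conj_sq ?mul0r ?mulr0 ?add0r ?addr0.
  by move=> H; apply: (wit_lemma H).
have W65 : c (@Ordinal 8 6 isT) (@Ordinal 8 5 isT) = 0.
  have := e1 (@Ordinal 6 1 isT) (@Ordinal 6 0 isT); rewrite big6 /xx /= ?sq0 ?conjC0 ?conj_sq ?mul0r ?mulr0 ?add0r ?addr0.
  by move=> H; apply: (wit_lemma H).
have W67 : c (@Ordinal 8 6 isT) (@Ordinal 8 7 isT) = 0.
  have := e1 (@Ordinal 6 4 isT) (@Ordinal 6 2 isT); rewrite big6 /xx /= ?sq0 ?conjC0 ?conj_sq ?mul0r ?mulr0 ?add0r ?addr0.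
  by move=> H; apply: (wit_lemma H).
have W70 : c (@Ordinal 8 7 isT) (@Ordinal 8 0 isT) = 0.
  have := e1 (@Ordinal 6 3 isT) (@Ordinal 6 5 isT); rewrite big6 /xx /= ?sq0 ?conjC0 ?conj_sq ?mul0r ?mulr0 ?add0r ?addr0.
  by move=> H; apply: (wit_lemma H).
have W71 : c (@Ordinal 8 7 isT) (@Ordinal 8 1 isT) = 0.
  have := e1 (@Ordinal 6 3 isT) (@Ordinal 6 4 isT); rewrite big6 /xx /= ?sq0 ?conjC0 ?conj_sq ?mul0r ?mulr0 ?add0r ?addr0.
  by move=> H; apply: (wit_lemma H).
have W72 : c (@Ordinal 8 7 isT) (@Ordinal 8 2 isT) = 0.
  have := e2 (@Ordinal 6 2 isT) (@Ordinal 6 5 isT); rewrite big6 /xx /= ?sq0 ?conjC0 ?conj_sq ?mul0r ?mulr0 ?add0r ?addr0.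
  by move=> H; apply: (wit_lemma H).
have W73 : c (@Ordinal 8 7 isT) (@Ordinal 8 3 isT) = 0.
  have := e2 (@Ordinal 6 4 isT) (@Ordinal 6 1 isT); rewrite big6 /xx /= ?sq0 ?conjC0 ?conj_sq ?mul0r ?mulr0 ?add0r ?addr0.
  by move=> H; apply: (wit_lemma H).
have W74 : c (@Ordinal 8 7 isT) (@Ordinal 8 4 isT) = 0.
  have := e2 (@Ordinal 6 4 isT) (@Ordinal 6 5 isT); rewrite big6 /xx /= ?sq0 ?conjC0 ?conj_sq ?mul0r ?mulr0 ?add0r ?addr0.
  by move=> H; apply: (wit_lemma H).
have W75 : c (@Ordinal 8 7 isT) (@Ordinal 8 5 isT) = 0.
  have := e2 (@Ordinal 6 2 isT) (@Ordinal 6 0 isT); rewrite big6 /xx /= ?sq0 ?conjC0 ?conj_sq ?mul0r ?mulr0 ?add0r ?addr0.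
  by move=> H; apply: (wit_lemma H).
have W76 : c (@Ordinal 8 7 isT) (@Ordinal 8 6 isT) = 0.
  have := e1 (@Ordinal 6 2 isT) (@Ordinal 6 4 isT); rewrite big6 /xx /= ?sq0 ?conjC0 ?conj_sq ?mul0r ?mulr0 ?add0r ?addr0.
  by move=> H; apply: (wit_lemma H).
have D0 := e1 (@Ordinal 6 0 isT) (@Ordinal 6 0 isT); rewrite big6 /xx /= ?sq0 ?conjC0 ?conj_sq ?mul0r ?mulr0 ?add0r ?addr0 ?sqK in D0.
have D1 := e1 (@Ordinal 6 1 isT) (@Ordinal 6 1 isT); rewrite big6 /xx /= ?sq0 ?conjC0 ?conj_sq ?mul0r ?mulr0 ?add0r ?addr0 ?sqK in D1.
have D2 := e1 (@Ordinal 6 2 isT) (@Ordinal 6 2 isT); rewrite big6 /xx /= ?sq0 ?conjC0 ?conj_sq ?mul0r ?mulr0 ?add0r ?addr0 ?sqK in D2.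
have D3 := e1 (@Ordinal 6 3 isT) (@Ordinal 6 3 isT); rewrite big6 /xx /= ?sq0 ?conjC0 ?conj_sq ?mul0r ?mulr0 ?add0r ?addr0 ?sqK in D3.
have D4 := e1 (@Ordinal 6 4 isT) (@Ordinal 6 4 isT); rewrite big6 /xx /= ?sq0 ?conjC0 ?conj_sq ?mul0r ?mulr0 ?add0r ?addr0 ?sqK in D4.
have D5 := e1 (@Ordinal 6 5 isT) (@Ordinal 6 5 isT); rewrite big6 /xx /= ?sq0 ?conjC0 ?conj_sq ?mul0r ?mulr0 ?add0r ?addr0 ?sqK in D5.
have D6 := e2 (@Ordinal 6 0 isT) (@Ordinal 6 0 isT); rewrite big6 /xx /= ?sq0 ?conjC0 ?conj_sq ?mul0r ?mulr0 ?add0r ?addr0 ?sqK in D6.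
have D7 := e2 (@Ordinal 6 1 isT) (@Ordinal 6 1 isT); rewrite big6 /xx /= ?sq0 ?conjC0 ?conj_sq ?mul0r ?mulr0 ?add0r ?addr0 ?sqK in D7.
have D8 := e2 (@Ordinal 6 2 isT) (@Ordinal 6 2 isT); rewrite big6 /xx /= ?sq0 ?conjC0 ?conj_sq ?mul0r ?mulr0 ?add0r ?addr0 ?sqK in D8.
have D9 := e2 (@Ordinal 6 3 isT) (@Ordinal 6 3 isT); rewrite big6 /xx /= ?sq0 ?conjC0 ?conj_sq ?mul0r ?mulr0 ?add0r ?addr0 ?sqK in D9.
have D10 := e2 (@Ordinal 6 4 isT) (@Ordinal 6 4 isT); rewrite big6 /xx /= ?sq0 ?conjC0 ?conj_sq ?mul0r ?mulr0 ?add0r ?addr0 ?sqK in D10.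
have D11 := e2 (@Ordinal 6 5 isT) (@Ordinal 6 5 isT); rewrite big6 /xx /= ?sq0 ?conjC0 ?conj_sq ?mul0r ?mulr0 ?add0r ?addr0 ?sqK in D11.
have W00 : c (@Ordinal 8 0 isT) (@Ordinal 8 0 isT) = 0.
  have H := lin12 (((64 + 100 * (82 + 100 * 25)) / (29 + 100 * (6 + 100 * 2)))) (-((4 + 100 * 95) / (47 + 100 * 29))) (-((49 + 100 * (68 + 100 * 9)) / (29 + 100 * (6 + 100 * 2)))) (((76 + 100 * 23) / (21 + 100 * 4))) (((52 + 100 * (10 + 100 * 1)) / (29 + 100 * (6 + 100 * 2)))) (-((89 + 100 * 82) / (29 + 100 * (6 + 100 * 2)))) (((41 + 100 * (26 + 100 * 5)) / (29 + 100 * (6 + 100 * 2)))) (-((41 + 100 * (2 + 100 * 20)) / (29 + 100 * (6 + 100 * 2)))) 0 0 0 0 D0 D1 D2 D3 D4 D5 D6 D7 D8 D9 D10 D11.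
  match type of H with ?P = 0 => have E : c (@Ordinal 8 0 isT) (@Ordinal 8 0 isT) = P by field end.
  by rewrite E.
have W11 : c (@Ordinal 8 1 isT) (@Ordinal 8 1 isT) = 0.
  have H := lin12 (((60 + 100 * (85 + 100 * 17)) / (29 + 100 * (6 + 100 * 2)))) (((41 + 100 * (27 + 100 * 4)) / (47 + 100 * 29))) (-((60 + 100 * (69 + 100 * 6)) / (29 + 100 * (6 + 100 * 2)))) (-((60 + 100 * 21) / (21 + 100 * 4))) (((88 + 100 * (60 + 100 * 5)) / (29 + 100 * (6 + 100 * 2)))) (-((66 + 100 * (20 + 100 * 4)) / (29 + 100 * (6 + 100 * 2)))) (-((92 + 100 * (73 + 100 * 15)) / (29 + 100 * (6 + 100 * 2)))) (((2 + 100 * (59 + 100 * 11)) / (29 + 100 * (6 + 100 * 2)))) 0 0 0 0 D0 D1 D2 D3 D4 D5 D6 D7 D8 D9 D10 D11.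
  match type of H with ?P = 0 => have E : c (@Ordinal 8 1 isT) (@Ordinal 8 1 isT) = P by field end.
  by rewrite E.
have W22 : c (@Ordinal 8 2 isT) (@Ordinal 8 2 isT) = 0.
  have H := lin12 (((64 + 100 * (84 + 100 * 59)) / (29 + 100 * (6 + 100 * 2)))) (((60 + 100 * (93 + 100 * 9)) / (47 + 100 * 29))) (-((24 + 100 * (44 + 100 * 22)) / (29 + 100 * (6 + 100 * 2)))) (-((40 + 100 * (48 + 100 * 2)) / (21 + 100 * 4))) (((64 + 100 * (48 + 100 * 14)) / (29 + 100 * (6 + 100 * 2)))) (-((48 + 100 * (86 + 100 * 10)) / (29 + 100 * (6 + 100 * 2)))) (-((32 + 100 * (50 + 100 * 35)) / (29 + 100 * (6 + 100 * 2)))) (((21 + 100 * (30 + 100 * (83 + 100 * 1))) / (29 + 100 * (6 + 100 * 2)))) 0 0 0 0 D0 D1 D2 D3 D4 D5 D6 D7 D8 D9 D10 D11.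
  match type of H with ?P = 0 => have E : c (@Ordinal 8 2 isT) (@Ordinal 8 2 isT) = P by field end.
  by rewrite E.
have W33 : c (@Ordinal 8 3 isT) (@Ordinal 8 3 isT) = 0.
  have H := lin12 (-((8 + 100 * (48 + 100 * 7)) / (29 + 100 * (6 + 100 * 2)))) (-((20 + 100 * (24 + 100 * 1)) / (47 + 100 * 29))) (((53 + 100 * (80 + 100 * 2)) / (29 + 100 * (6 + 100 * 2)))) (((5 + 100 * 31) / (21 + 100 * 4))) (-((8 + 100 * (81 + 100 * 1)) / (29 + 100 * (6 + 100 * 2)))) (((81 + 100 * (35 + 100 * 1)) / (29 + 100 * (6 + 100 * 2)))) (((79 + 100 * (43 + 100 * 4)) / (29 + 100 * (6 + 100 * 2)))) (-((59 + 100 * (2 + 100 * 2)) / (29 + 100 * (6 + 100 * 2)))) 0 0 0 0 D0 D1 D2 D3 D4 D5 D6 D7 D8 D9 D10 D11.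
  match type of H with ?P = 0 => have E : c (@Ordinal 8 3 isT) (@Ordinal 8 3 isT) = P by field end.
  by rewrite E.
have W44 : c (@Ordinal 8 4 isT) (@Ordinal 8 4 isT) = 0.
  have H := lin12 (((60 + 100 * (35 + 100 * 58)) / (29 + 100 * (6 + 100 * 2)))) (((40 + 100 * (82 + 100 * 13)) / (47 + 100 * 29))) (-((35 + 100 * (88 + 100 * 21)) / (29 + 100 * (6 + 100 * 2)))) (-((60 + 100 * (45 + 100 * 3)) / (21 + 100 * 4))) (((64 + 100 * (36 + 100 * 53)) / (29 + 100 * (6 + 100 * 2)))) (-((48 + 100 * (2 + 100 * 40)) / (29 + 100 * (6 + 100 * 2)))) (-((72 + 100 * (48 + 100 * 24)) / (29 + 100 * (6 + 100 * 2)))) (((76 + 100 * (81 + 100 * (21 + 100 * 2))) / (29 + 100 * (6 + 100 * 2)))) 0 0 0 0 D0 D1 D2 D3 D4 D5 D6 D7 D8 D9 D10 D11.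
  match type of H with ?P = 0 => have E : c (@Ordinal 8 4 isT) (@Ordinal 8 4 isT) = P by field end.
  by rewrite E.
have W55 : c (@Ordinal 8 5 isT) (@Ordinal 8 5 isT) = 0.
  have H := lin12 (-((80 + 100 * (92 + 100 * 8)) / (47 + 100 * 29))) (-((20 + 100 * 43) / (21 + 100 * 4))) (((80 + 100 * (34 + 100 * 3)) / (47 + 100 * 29))) (((60 + 100 * 75) / (21 + 100 * 4))) (-((44 + 100 * (80 + 100 * 2)) / (47 + 100 * 29))) (((33 + 100 * (10 + 100 * 2)) / (47 + 100 * 29))) (((96 + 100 * (86 + 100 * 7)) / (47 + 100 * 29))) (-((51 + 100 * (79 + 100 * 5)) / (47 + 100 * 29))) 0 0 0 0 D0 D1 D2 D3 D4 D5 D6 D7 D8 D9 D10 D11.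
  match type of H with ?P = 0 => have E : c (@Ordinal 8 5 isT) (@Ordinal 8 5 isT) = P by field end.
  by rewrite E.
have W66 : c (@Ordinal 8 6 isT) (@Ordinal 8 6 isT) = 0.
  have H := lin12 (-((45 + 100 * (29 + 100 * 7)) / (29 + 100 * (6 + 100 * 2)))) (-((80 + 100 * (72 + 100 * 1)) / (47 + 100 * 29))) (((23 + 100 * (62 + 100 * 23)) / (29 + 100 * (6 + 100 * 2)))) (((20 + 100 * 43) / (21 + 100 * 4))) (-((8 + 100 * (67 + 100 * 6)) / (29 + 100 * (6 + 100 * 2)))) (((31 + 100 * (0 + 100 * 5)) / (29 + 100 * (6 + 100 * 2)))) (((9 + 100 * (6 + 100 * 3)) / (29 + 100 * (6 + 100 * 2)))) (-((72 + 100 * (72 + 100 * 27)) / (29 + 100 * (6 + 100 * 2)))) 0 0 0 0 D0 D1 D2 D3 D4 D5 D6 D7 D8 D9 D10 D11.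
  match type of H with ?P = 0 => have E : c (@Ordinal 8 6 isT) (@Ordinal 8 6 isT) = P by field end.
  by rewrite E.
have W77 : c (@Ordinal 8 7 isT) (@Ordinal 8 7 isT) = 0.
  have H := lin12 (-((4 + 100 * 59) / (21 + 100 * 4))) (-((0 + 100 * (8 + 100 * 1)) / (21 + 100 * 4))) (((14 + 100 * 22) / (21 + 100 * 4))) (((0 + 100 * (89 + 100 * 1)) / (21 + 100 * 4))) (-((69 + 100 * 21) / (42 + 100 * 8))) (((76 + 100 * 50) / (21 + 100 * 4))) (((24 + 100 * 21) / (21 + 100 * 4))) (-((28 + 100 * (96 + 100 * 2)) / (21 + 100 * 4))) 0 0 0 0 D0 D1 D2 D3 D4 D5 D6 D7 D8 D9 D10 D11.
  match type of H with ?P = 0 => have E : c (@Ordinal 8 7 isT) (@Ordinal 8 7 isT) = P by field end.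
  by rewrite E.
apply/matrixP => i j; rewrite mxE.
case: i => [[|[|[|[|[|[|[|[|i]]]]]]]] Hi] //; rewrite (bool_irrelevance Hi isT);
case: j => [[|[|[|[|[|[|[|[|j]]]]]]]] Hj] //; rewrite (bool_irrelevance Hj isT); assumption.
Qed.

End Concrete2.


Section Concrete3.
Variable C : numClosedFieldType.
Local Notation Kc := (@Kc C).
Local Notation xx := (@xx C).

Definition eaf (l : nat) : 'I_6 :=
  match l with
  | 0 => @Ordinal 6 0 isT | 1 => @Ordinal 6 4 isT | 2 => @Ordinal 6 1 isT
  | 3 => @Ordinal 6 1 isT | 4 => @Ordinal 6 0 isT | 5 => @Ordinal 6 0 isT
  | 6 => @Ordinal 6 3 isT | _ => @Ordinal 6 2 isT end.
Definition ebf (l : nat) : 'I_6 :=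
  match l with
  | 0 => @Ordinal 6 0 isT | 1 => @Ordinal 6 3 isT | 2 => @Ordinal 6 0 isT
  | 3 => @Ordinal 6 4 isT | 4 => @Ordinal 6 2 isT | 5 => @Ordinal 6 5 isT
  | 6 => @Ordinal 6 0 isT | _ => @Ordinal 6 5 isT end.

Lemma hcol (l : 'I_8) : col (eaf l) (ebf l) = l.
Proof.
by apply: val_inj; case: l => [[|[|[|[|[|[|[|[|l]]]]]]]] Hl].
Qed.

Lemma hx (l : 'I_8) : xx (eaf l) (ebf l) != 0.
Proof.
by case: l => [[|[|[|[|[|[|[|[|l]]]]]]]] Hl] //; rewrite /xx /=; apply: sq_neq0.
Qed.

Definition Lmx : 'M[C]_(8, \sum_(r < 6) 6) :=
  \mxrow_(r < 6) (\matrix_(l < 8, a < 6)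
     if (a == eaf l) && (r == ebf l) then (xx a r)^-1 else 0).

Lemma hLmx : Lmx *m Vmx Kc = 1%:M.
Proof.
apply/matrixP => l l'; rewrite /Lmx /Vmx (@mul_mxrow_mxcol C 6 (fun _ => 6) 8 8) summxE.
rewrite (bigD1 (ebf l)) //= big1 ?addr0; last first.
  move=> r /negbTE hr; rewrite mxE big1 // => a _; rewrite !mxE hr andbF mul0r //.
rewrite mxE (bigD1 (eaf l)) //= big1 ?addr0; last first.
  by move=> a /negbTE ha; rewrite !mxE ha mul0r.
rewrite !mxE !eqxx /= hcol.
by case: (l == l'); rewrite ?mulr0 // mulVf // hx.
Qed.

Lemma main_gen : exists Phi : 'M[C]_6 -> 'M[C]_6,
    extreme_point (CPset (D_mx C) (D_mx C)) Phi /\ choi_rank Phi = 8%N.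
Proof.
exists (kraus Kc); split.
  rewrite -{1}(sumAK C) -(sumBK C).
  exact: (extreme_kraus hLmx (@indK C)).
exact: (rank_kraus hLmx).
Qed.

End Concrete3.

Theorem mainTheorem8 (R : realType) :
  exists Phi : 'M[R[i]]_6 -> 'M[R[i]]_6,
    extreme_point (CPset (D_mx R[i]) (D_mx R[i])) Phi /\ choi_rank Phi = 8%N.
Proof. exact: main_gen. Qed.
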